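(* Let $\mathcal T(W)$ be the directed unweighted graph on $\mathcal V$ having an edge from $i$ to $j$ if and only if $w_{ij}>\tfrac12$. Then $\mathcal V$ is the only non-empty cohesive subset of $\mathcal V$ if and only if the edges of $\mathcal T(W)$ form a single directed cycle that traverses all the nodes of $\mathcal V$.
   Context: Let $n\ge1$, $\mathcal V=\{1,\dots,n\}$, and let $W=(w_{ij})$ be an $n\times n$ row-stochastic matrix (nonnegative entries, each row summing to $1$), viewed as the weighted adjacency matrix of a directed graph on $\mathcal V$. A set $\mathcal M\subseteq\mathcal V$ is cohesive if $\sum_{j\in\mathcal M}w_{ij}\ge\tfrac12$ for every $i\in\mathcal M$. *)

(* Defs.v *)
From mathcomp Require Import all_boot all_order all_algebra.
Set Implicit Arguments. Unset Strict Implicit. Unset Printing Implicit Defensive.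
Import Order.TTheory GRing.Theory Num.Theory.
Local Open Scope ring_scope.

(* Nodes V = {1,...,n} are represented by 'I_n. *)

Definition row_stochastic (R : realFieldType) (n : nat) (W : 'M[R]_n) : Prop :=
  (forall i j, 0 <= W i j) /\ (forall i, \sum_(j < n) W i j = 1).

Definition cohesive (R : realFieldType) (n : nat) (W : 'M[R]_n) (M : {set 'I_n}) : Prop :=
  forall i, i \in M -> 2^-1 <= \sum_(j in M) W i j.

Definition Tgraph (R : realFieldType) (n : nat) (W : 'M[R]_n) : rel 'I_n :=
  fun i j => 2^-1 < W i j.

(* The edges of the digraph e form a single directed cycle traversing all
   nodes: there is a listing s of all nodes, each exactly once, such that the
   edges are exactly the pairs (i, successor of i in the cyclic order s). *)
Definition single_hamiltonian_cycle (n : nat) (e : rel 'I_n) : Prop :=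
  exists s : seq 'I_n,
    [/\ uniq s, (forall i, i \in s) & (forall i j, e i j = (j == next s i))].

(* Main.v *)
Require Import Defs.
From mathcomp Require Import all_boot all_order all_algebra.
From mathcomp Require Import lra.
Import Order.TTheory GRing.Theory Num.Theory.
Local Open Scope ring_scope.

Lemma closed_fconnect (T : finType) (f : T -> T) (M : {set T}) x y :
  (forall i, i \in M -> f i \in M) -> fconnect f x y -> x \in M -> y \in M.
Proof.
move=> cl /connectP[p fp ->]; elim: p x fp => //= z p IH x /andP[/eqP <- fp] xM.
by apply: IH => //; apply: cl.
Qed.

Lemma row_split (R : realFieldType) (n : nat) (W : 'M[R]_n) i j :
  row_stochastic W ->
  \sum_(k < n) W i k = W i j + \sum_(k < n | k != j) W i k.
Proof. by move=> _; rewrite (bigD1 j). Qed.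

Lemma at_most_one (R : realFieldType) (n : nat) (W : 'M[R]_n) i j k :
  row_stochastic W -> 2^-1 < W i j -> 2^-1 < W i k -> j = k.
Proof.
move=> [W0 W1] hj hk; apply/eqP; apply/negPn/negP => njk.
have := W1 i; rewrite (bigD1 j) // (bigD1 k) /=; last by rewrite eq_sym.
  move=> e.
have : 0 <= \sum_(l < n | (l != j) && (l != k)) W i l by apply: sumr_ge0.
move: e; set S := \sum_(_ < n | _) _ => e hS.
have h2 : (2^-1 : R) + 2^-1 = 1 by rewrite -mulr2n -[_ *+ 2]mulr_natr mulVf // pnatr_eq0.
lra.
Qed.

Theorem proposition1 (R : realFieldType) (n : nat) (W : 'M[R]_n) :
  (0 < n)%N -> row_stochastic W ->
  ((forall M : {set 'I_n}, M != set0 -> cohesive W M -> M = [set: 'I_n])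
   <-> single_hamiltonian_cycle (Tgraph W)).
Proof.
move=> n0 [W0 W1]; have WS : row_stochastic W by [].
have h2 : (2^-1 : R) + 2^-1 = 1 by rewrite -mulr2n -[_ *+ 2]mulr_natr mulVf // pnatr_eq0.
have h2p : (0 : R) < 2^-1 by rewrite invr_gt0 ltr0n.
split.
- move=> H.
  have [n1|n2] := leqP n 1.
    pose i0 := Ordinal n0.
    have all0 : forall i : 'I_n, i = i0.
      by move=> i; apply/val_inj/eqP; rewrite /= -leqn0 -ltnS; exact: leq_trans (ltn_ord i) n1.
    exists [:: i0]; split => //.
      by move=> i; rewrite (all0 i) mem_seq1.
    move=> i j; rewrite (all0 i) (all0 j) /= eqxx /Tgraph.
    have := W1 i0; rewrite (bigD1 i0) //= big_pred0; last first.
      by move=> j'; rewrite (all0 j') eqxx.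
    by rewrite addr0 => ->; lra.
  have inn : forall k, [exists i, (i != k) && (2^-1 < W i k)].
    move=> k; case: existsP => // hk0; exfalso.
    have hk : forall i, ~~ ((i != k) && (2^-1 < W i k)).
      by move=> i; apply/negP => hi; apply: hk0; exists i.
    have ne : setT :\ k != set0.
      have := cardsD1 k [set: 'I_n]; rewrite cardsT card_ord in_setT /= add1n => e.
      by rewrite -card_gt0 -ltnS -e.
    have coh : cohesive W (setT :\ k).
      move=> i; rewrite !inE andbT => ik.
      have := W1 i; rewrite (bigD1 k) //= (eq_bigl (fun j => j \in setT :\ k)); last first.
        by move=> j; rewrite !inE andbT.
      have := hk i; rewrite ik /= -leNgt => hik; lra.
    by move: (H _ ne coh) => /setP/(_ k); rewrite !inE eqxx.
  pose g k := odflt k [pick i | (i != k) && (2^-1 < W i k)].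
  have gP : forall k, (g k != k) && (2^-1 < W (g k) k).
    move=> k; rewrite /g; case: pickP => [i hi //|hn].
    by have /existsP[i hi] := inn k; rewrite hn in hi.
  have ginj : injective g.
    move=> k1 k2 e; apply: (@at_most_one R n W (g k1)) => //.
      by case/andP: (gP k1).
    by rewrite e; case/andP: (gP k2).
  pose f := finv g.
  have finj : injective f by apply: finv_inj.
  have ef : forall i, 2^-1 < W i (f i).
    by move=> i; have /andP[_] := gP (f i); rewrite f_finv.
  have eT : forall i j, Tgraph W i j = (j == f i).
    move=> i j; apply/idP/eqP => [hij|->]; last exact: ef.
    exact: (@at_most_one R n W i).
  pose x0 := Ordinal n0.
  pose M := [set y | y \in orbit f x0].
  have MT : M = setT.
    apply: H.
      by apply/set0Pn; exists x0; rewrite inE in_orbit.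
    move=> i; rewrite inE => iM.
    rewrite (bigD1 (f i)) /=; last by rewrite inE mem_orbit.
    have : 0 <= \sum_(j in M | j != f i) W i j by apply: sumr_ge0.
    have := ef i; lra.
  have alls : forall i, i \in orbit f x0.
    by move=> i; have := in_setT i; rewrite -MT inE.
  exists (orbit f x0); split => [|//|i j]; first exact: orbit_uniq.
  rewrite eT; congr (_ == _); apply/eqP.
  exact: (next_cycle (cycle_orbit finj x0) (alls i)).
- case=> s [us alls es] M /set0Pn [x xM] coh.
  have cl : forall i, i \in M -> next s i \in M.
    move=> i iM; apply/negPn/negP => nM.
    have := coh i iM; have := W1 i.
    rewrite (bigID (fun t => t \in M)) /= [X in _ + X](bigD1 (next s i)) //=.
    have : 0 <= \sum_(t < n | (t \notin M) && (t != next s i)) W i t by apply: sumr_ge0.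
    have : 2^-1 < W i (next s i) by rewrite -/(Tgraph W i _) es.
    set A := \sum_(t | t \in M) W i t.
    set B := \sum_(t < n | _) _ => hw hB e hA.
    lra.
  apply/setP => y; rewrite in_setT; apply: (@closed_fconnect _ (next s) M x y cl _ xM).
  by rewrite (fconnect_cycle (cycle_next us) (alls x)).
Qed.
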